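(* Let $G$ be a directed acyclic graph on $[n]$ and $H\subseteq G$ a subgraph. Then $\tilde Q_H$ is a face of $\tilde Q_G$ if and only if the multigraph $H_{comp}$ is loopless and has no directed cycles.
   Context: Conventions: $G$ is a directed acyclic graph with vertex set $[n]$, every edge $(i,j)\in E(G)$ satisfying $i<j$. A subgraph $H\subseteq G$ means $V(H)=[n]$ and $E(H)\subseteq E(G)$; $H^{un}$ is the underlying undirected graph of $H$. $\tilde Q_G=\mathrm{conv}(\{\mathbf 0\}\cup\{\mathbf e_i-\mathbf e_j:(i,j)\in E(G)\})\subset\mathbb R^n$, similarly $\tilde Q_H$. The directed multigraph $H_{comp}$ has as vertices the connected components of $H^{un}$, and for each edge $(u,v)\in E(G)\setminus E(H)$ one edge from the component containing $u$ to the component containing $v$ (so $H_{comp}$ may have multiple edges, loops, and directed cycles). *)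

(* Defs.v *)
From HB Require Import structures.
From mathcomp Require Import all_boot all_order all_algebra.
Set Implicit Arguments. Unset Strict Implicit. Unset Printing Implicit Defensive.
Import Order.TTheory GRing.Theory Num.Theory.
Local Open Scope ring_scope.

(* Vertices [n] are represented by 'I_n; a (directed) graph on [n] is its edge
   set E : {set 'I_n * 'I_n}.  Vectors of R^n are row vectors 'rV[R]_n. *)

Definition unitv (R : ringType) (n : nat) (i : 'I_n) : 'rV[R]_n :=
  \row_k (k == i)%:R.

(* G is a DAG in the paper's convention: every edge (i,j) has i < j. *)
Definition dag_edges (n : nat) (E : {set 'I_n * 'I_n}) : Prop :=
  forall e, e \in E -> (e.1 < e.2)%N.

(* x lies in conv({0} ∪ {e_i - e_j : (i,j) ∈ E}) *)
Definition inQ (R : realFieldType) (n : nat) (E : {set 'I_n * 'I_n})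
  (x : 'rV[R]_n) : Prop :=
  exists (lam0 : R) (lam : 'I_n * 'I_n -> R),
    [/\ 0 <= lam0, (forall e, e \in E -> 0 <= lam e),
        lam0 + \sum_(e in E) lam e = 1 &
        x = \sum_(e in E) lam e *: (unitv R e.1 - unitv R e.2)].

Definition dotv (R : ringType) (n : nat) (c x : 'rV[R]_n) : R :=
  \sum_(k < n) c 0 k * x 0 k.

Definition is_face (R : realFieldType) (n : nat) (P F : 'rV[R]_n -> Prop) : Prop :=
  exists (c : 'rV[R]_n) (b : R),
    (forall x, P x -> dotv c x <= b) /\
    (forall x, F x <-> (P x /\ dotv c x = b)).

Definition un_rel (n : nat) (H : {set 'I_n * 'I_n}) : rel 'I_n :=
  fun x y => ((x, y) \in H) || ((y, x) \in H).

Definition same_comp (n : nat) (H : {set 'I_n * 'I_n}) (x y : 'I_n) : bool :=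
  connect (un_rel H) x y.

(* H_comp is loopless: no edge of G \ H joins two vertices of one component *)
Definition comp_loopless (n : nat) (G H : {set 'I_n * 'I_n}) : Prop :=
  forall e, e \in G :\: H -> ~~ same_comp H e.1 e.2.

(* Edge of H_comp between distinct components, lifted to representatives:
   compE x y iff there is an edge (u,v) of G \ H with u in comp(x), v in comp(y),
   and comp(x) <> comp(y). *)
Definition compE (n : nat) (G H : {set 'I_n * 'I_n}) : rel 'I_n :=
  fun x y => [exists e in G :\: H,
                 same_comp H x e.1 && same_comp H e.2 y] && ~~ same_comp H x y.

Definition comp_acyclic (n : nat) (G H : {set 'I_n * 'I_n}) : Prop :=
  ~ exists x y, compE G H x y /\ connect (compE G H) y x.

(* Main.v *)
Require Import Defs.
From HB Require Import structures.
From mathcomp Require Import all_boot all_order all_algebra.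
From mathcomp Require Import lra.
Import Order.TTheory GRing.Theory Num.Theory.
Local Open Scope ring_scope.

Section Aux.
Variable R : realFieldType.
Variable n : nat.
Implicit Types (c x y : 'rV[R]_n).

Lemma path_closed (T : finType) (r : rel T) (Q : T -> Prop) a b :
  (forall u v, Q u -> r u v -> Q v) -> Q a -> connect r a b -> Q b.
Proof.
move=> cl Qa /connectP [p pth ->]; elim: p a Qa pth => //= z p IH a Qa /andP[raz pth].
exact: IH (cl _ _ Qa raz) pth.
Qed.

Lemma dotv_sum c (I : Type) (r : seq I) (P : pred I) (F : I -> 'rV[R]_n) :
  dotv c (\sum_(i <- r | P i) F i) = \sum_(i <- r | P i) dotv c (F i).
Proof.
rewrite /dotv; under eq_bigr do rewrite summxE mulr_sumr.
exact: exchange_big.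
Qed.

Lemma dotvZ c a x : dotv c (a *: x) = a * dotv c x.
Proof. rewrite /dotv mulr_sumr; apply: eq_bigr => k _; rewrite mxE; lra. Qed.

Lemma dotvB c x y : dotv c (x - y) = dotv c x - dotv c y.
Proof. rewrite /dotv -sumrB; apply: eq_bigr => k _; rewrite !mxE mulrBr. done. Qed.

Lemma dotv_unit c i : dotv c (unitv R i) = c 0 i.
Proof.
rewrite /dotv (bigD1 i) //= big1 ?addr0; first by rewrite mxE eqxx mulr1.
by move=> k /negbTE ki; rewrite mxE ki mulr0.
Qed.

Lemma dotv0 c : dotv c 0 = 0.
Proof. by rewrite /dotv big1 // => k _; rewrite mxE mulr0. Qed.

Lemma dotv_comb c (E : {set 'I_n * 'I_n}) lam :
  dotv c (\sum_(e in E) lam e *: (unitv R e.1 - unitv R e.2)) =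
  \sum_(e in E) lam e * (c 0 e.1 - c 0 e.2).
Proof.
rewrite dotv_sum; apply: eq_bigr => e _.
by rewrite dotvZ dotvB !dotv_unit.
Qed.

Lemma sum_sub (V : zmodType) (G H : {set 'I_n * 'I_n}) (F : 'I_n * 'I_n -> V) :
  H \subset G -> (forall e, e \in G -> e \notin H -> F e = 0) ->
  \sum_(e in G) F e = \sum_(e in H) F e.
Proof.
move=> sHG F0; rewrite (big_setID H) /= (setIidPr sHG) [X in _ + X]big1 ?addr0 //.
by move=> e; rewrite in_setD => /andP[eH eG]; apply: F0.
Qed.

Lemma inQ_pt (E : {set 'I_n * 'I_n}) e : e \in E ->
  inQ E (unitv R e.1 - unitv R e.2).
Proof.
move=> eE; exists 0, (fun f => (f == e)%:R); split => //.
- rewrite add0r (bigD1 e) //= eqxx big1 ?addr0 // => f /andP[_ /negbTE ->]. done.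
- rewrite (bigD1 e) //= eqxx scale1r big1 ?addr0 // => f /andP[_ /negbTE ->].
  by rewrite scale0r.
Qed.

Lemma inQ0 (E : {set 'I_n * 'I_n}) : inQ E (0 : 'rV[R]_n).
Proof.
exists 1, (fun _ => 0); split => //.
- by rewrite big1 ?addr0.
- by rewrite big1 // => e _; rewrite scale0r.
Qed.

End Aux.

Theorem mainTheorem5 (R : realFieldType) (n : nat) (G H : {set 'I_n * 'I_n})
  (hG : dag_edges G) (hHG : H \subset G) :
  is_face (@inQ R n G) (@inQ R n H) <-> (comp_loopless G H /\ comp_acyclic G H).
Proof.
have scsym : forall a b, same_comp H a b = same_comp H b a.
  by rewrite /same_comp; apply: sym_connect_sym => p q; rewrite /un_rel orbC.
split.
- move=> [c [b [hv hiff]]].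
  have b0 : b = 0 by have /hiff [_ <-] := @inQ0 R n H; rewrite dotv0.
  subst b.
  have hle : forall e, e \in G -> c 0 e.1 <= c 0 e.2.
    move=> e eG; have := hv _ (@inQ_pt R n G e eG).
    by rewrite dotvB !dotv_unit subr_le0.
  have heq : forall e, e \in H -> c 0 e.1 = c 0 e.2.
    move=> e eH; have /hiff [_] := @inQ_pt R n H e eH.
    by rewrite dotvB !dotv_unit => /eqP; rewrite subr_eq0 => /eqP.
  have hlt : forall e, e \in G -> e \notin H -> c 0 e.1 < c 0 e.2.
    move=> e eG eH; rewrite lt_def hle // andbT; apply/negP => /eqP eq.
    have : inQ H (unitv R e.1 - unitv R e.2).
      apply/hiff; split; first exact: inQ_pt.
      by rewrite dotvB !dotv_unit eq subrr.
    case=> l0 [l [l0ge lge lsum hx]].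
    have := congr1 (dotv (unitv R e.1 - unitv R e.2)) hx.
    rewrite dotv_comb dotvB !dotv_unit.
    have ne12 : (e.1 == e.2) = false.
      by apply/negbTE/eqP => h; have := hG e eG; rewrite h ltnn.
    rewrite !mxE eqxx ne12 eq_sym ne12 /= => hs.
    have hb : \sum_(f in H) l f * ((unitv R e.1 - unitv R e.2) 0 f.1
                 - (unitv R e.1 - unitv R e.2) 0 f.2) <= \sum_(f in H) l f.
      apply: ler_sum => f fH.
      have g1 : (unitv R e.1 - unitv R e.2) 0 f.1
                 - (unitv R e.1 - unitv R e.2) 0 f.2 <= 1.
        have ne : ~~ ((f.1 == e.1) && (f.2 == e.2)).
          apply/negP => /andP[/eqP h1 /eqP h2]; move: fH eH.
          by rewrite [f]surjective_pairing [e]surjective_pairing h1 h2 => ->.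
        rewrite !mxE.
        move: (ler0n R (f.1 == e.2)) (ler0n R (f.2 == e.1)) ne.
        case: (f.1 == e.1); case: (f.2 == e.2) => //= h1 h2 _; lra.
      have := lge f fH; nra.
    move: hb lsum l0ge; rewrite -hs eqxx /= => hb lsum l0ge; clear -hb lsum l0ge; lra.
  have sceq : forall x y, same_comp H x y -> c 0 x = c 0 y.
    move=> x y; apply: (@path_closed _ _ (fun z => c 0 x = c 0 z)) => // a b' ->.
    by case/orP => h; [exact: (heq (a, b') h) | exact/esym/(heq (b', a) h)].
  split.
  + move=> e /setDP [eG eH]; apply/negP => sce.
    have := hlt e eG eH; rewrite (sceq _ _ sce) ltxx. done.
  + move=> [x [y [cxy cyx]]].
    have ltc : forall a b', compE G H a b' -> c 0 a < c 0 b'.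
      move=> a b' /andP[/existsP[e /andP[/setDP[eG eH] /andP[s1 s2]]] _].
      by rewrite (sceq _ _ s1) -(sceq _ _ s2); exact: hlt.
    have : c 0 y <= c 0 x.
      apply: (@path_closed _ _ (fun z => c 0 y <= c 0 z)) cyx => //.
      by move=> a b' h /ltc h'; apply: le_trans h (ltW h').
    have := ltc _ _ cxy; lra.
- move=> [hloop hacyc].
  pose r : rel 'I_n := fun y x => ((y, x) \in G) || ((x, y) \in H).
  pose A := fun x => [set y | connect r y x].
  pose c : 'rV[R]_n := \row_i (#|A i|)%:R.
  have cE : forall i, c 0 i = (#|A i|)%:R by move=> i; rewrite mxE.
  have rsub : forall a b, r a b -> A a \subset A b.
    move=> a b rab; apply/subsetP => y; rewrite !inE => h.
    exact: connect_trans h (connect1 rab).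
  have rle : forall a b, r a b -> (#|A a| <= #|A b|)%N.
    by move=> a b /rsub; apply: subset_leq_card.
  have key : forall u v, (u, v) \in G -> (u, v) \notin H -> ~ connect r v u.
    move=> u v uG uH cvu.
    have : exists u', same_comp H u' u && connect (compE G H) v u'.
      apply: (@path_closed _ _ (fun b => exists b', same_comp H b' b && connect (compE G H) v b')) cvu; last first.
        by exists v; rewrite /same_comp !connect0.
      move=> a b [b' /andP[s1 c1]] /orP [abG|baH].
      * case abH : ((a, b) \in H).
          exists b'; rewrite c1 andbT; apply: connect_trans s1 (connect1 _).
          by rewrite /un_rel abH.
        have nab : ~~ same_comp H a b.
          by apply: (hloop (a, b)); rewrite in_setD abH abG.
        exists b; rewrite /same_comp connect0 /=.
        apply: connect_trans c1 (connect1 _); apply/andP; split.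
          apply/existsP; exists (a, b); rewrite in_setD abH abG /=.
          by rewrite s1 /same_comp connect0.
        apply: contra nab => h; apply: connect_trans h.
        by rewrite -/(same_comp H a b') scsym.
      * exists b'; rewrite c1 andbT; apply: connect_trans s1 (connect1 _).
        by rewrite /un_rel baH orbT.
    case=> u' /andP[s1 c1]; apply: hacyc; exists u', v; split => //.
    apply/andP; split.
      apply/existsP; exists (u, v); rewrite in_setD uH uG /=.
      by rewrite s1 /same_comp connect0.
    have nuv : ~~ same_comp H u v by apply: (hloop (u, v)); rewrite in_setD uH uG.
    apply: contra nuv => h; apply: connect_trans h.
    by rewrite -/(same_comp H u u') scsym.
  have hlt : forall u v, (u, v) \in G -> (u, v) \notin H -> (#|A u| < #|A v|)%N.
    move=> u v uG uH; apply: proper_card; apply/properP; split.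
      by apply: rsub; rewrite /r uG.
    exists v; first by rewrite inE connect0.
    by rewrite inE; apply/negP; exact: key.
  exists c, 0; split.
  + move=> x [l0 [l [l0ge lge lsum ->]]]; rewrite dotv_comb.
    apply: sumr_le0 => e eE; rewrite !cE.
    apply: mulr_ge0_le0; first exact: lge.
    rewrite subr_le0 ler_nat; apply: rle.
    by move: eE; case: e => u v eE; rewrite /r eE.
  + move=> x; split.
    * move=> [l0 [l [l0ge lge lsum hx]]]; split.
        exists l0, (fun e => if e \in H then l e else 0); split=> //.
        - by move=> e _; case: ifP => eH //; exact: lge.
        - rewrite -lsum (@sum_sub n _ G H) //; last by move=> e _ /negbTE ->.
          by congr (_ + _); apply: eq_bigr => e ->.
        - rewrite hx (@sum_sub n _ G H) //; last by move=> e _ /negbTE ->; rewrite scale0r.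
          by apply: eq_bigr => e ->.
      rewrite hx dotv_comb big1 // => e eH; rewrite !cE.
      have [h1 h2] : r e.1 e.2 /\ r e.2 e.1.
        by case: e eH => u v eH; rewrite /r /= eH orbT (subsetP hHG _ eH).
      by rewrite (@anti_leq #|A e.1| #|A e.2|) ?subrr ?mulr0 // (rle _ _ h1) (rle _ _ h2).
    * move=> [[l0 [l [l0ge lge lsum hx]]] hdot].
      rewrite hx dotv_comb in hdot.
      have z : forall e, e \in G -> - (l e * (c 0 e.1 - c 0 e.2)) = 0.
        apply: psumr_eq0P.
          move=> e eE; rewrite oppr_ge0 !cE.
          apply: mulr_ge0_le0; first exact: lge.
          rewrite subr_le0 ler_nat; apply: rle.
          by move: eE; case: e => u v eE; rewrite /r eE.
        by rewrite sumrN hdot oppr0.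
      have l0' : forall e, e \in G -> e \notin H -> l e = 0.
        move=> e eG eH; have /eqP := z e eG; rewrite oppr_eq0 mulf_eq0.
        case/orP => [/eqP //|]; rewrite subr_eq0 !cE eqr_nat ltn_eqF //.
        by move: eG eH; case: e => u v; exact: hlt.
      exists l0, l; split => //.
        - by move=> e /(subsetP hHG) /lge.
        - by rewrite -lsum (@sum_sub n _ G H).
      - rewrite hx (@sum_sub n _ G H) // => e eG eH.
        by rewrite l0' // scale0r.
Qed.
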